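(* Let $(X,\tau)$ be a topological space, $\delta$ a quasi-proximity compatible with $\tau$ such that $\mathcal{V}_\delta$ is transitive, and suppose $N_i\in\mathcal{B}(\mathcal{V}_\delta)$ ($i\in\mathbb{N}$) satisfy $N_i\subsetneq N_{i+1}$ and $\bigcup_{i}N_i\in\mathcal{B}(\mathcal{V}_\delta)$. For $A\subseteq\mathbb{N}$ let $\alpha_A=\{X\}\cup\{N_i:i\notin A\}$ and let $U_A$ be the relation with $U_A(x)=\bigcap\{M\in\alpha_A:x\in M\}$. For a p-filter $\sigma$ on $\mathbb{N}$ let $\mathcal{V}_\sigma$ be the filter on $X\times X$ generated by $\mathcal{V}_\delta\cup\{U_A:A\in\sigma\}$. Then each $\mathcal{V}_\sigma$ belongs to $\pi(\delta)\cap T(\tau)$, and for p-filters $\sigma_1,\sigma_2$, $\mathcal{V}_{\sigma_1}\subseteq\mathcal{V}_{\sigma_2}$ implies $\sigma_1\subseteq\sigma_2$; in particular $\sigma\mapsto\mathcal{V}_\sigma$ is injective.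
   Context: Quasi-uniformities and quasi-proximities are in the sense of Fletcher–Lindgren. $\pi(\delta)$ is the set of quasi-uniformities inducing $\delta$, $\mathcal{V}_\delta$ its coarsest element; $T(\tau)$ the set of compatible quasi-uniformities with a base of transitive entourages. For $N\subseteq X$, $U_N=(N\times N)\cup((X\setminus N)\times X)$ and $\mathcal{B}(\mathcal{V}_\delta)=\{N\in\tau:U_N\in\mathcal{V}_\delta\}$. For $N\subseteq\mathbb{N}$, an $N$-pile is a subset $H\subseteq N$ that is maximal with respect to the property: $i,j\in H$, $i<k<j$, $k\in\mathbb{N}$ imply $k\in H$. A set $Z\subseteq\mathbb{N}$ is admissible for $N$ if there is $k\in\mathbb{N}$ with $|H\cap Z|\le k$ for every $N$-pile $H$. A filter $\sigma$ on $\mathbb{N}$ is a p-filter if whenever $N\in\sigma$ and $Z$ is admissible for $N$, then $N\setminus Z\in\sigma$. *)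

(* Defs.v *)
From Stdlib Require Import List Classical.
Import ListNotations.

Definition set (X : Type) := X -> Prop.
Definition rel (X : Type) := X -> X -> Prop.

Definition subset {X} (A B : set X) := forall x, A x -> B x.
Definition rsubset {X} (U V : rel X) := forall x y, U x y -> V x y.

Definition is_topology {X} (tau : set (set X)) : Prop :=
  tau (fun _ => True) /\
  (forall G H, tau G -> tau H -> tau (fun x => G x /\ H x)) /\
  (forall F : set (set X), (forall G, F G -> tau G) ->
      tau (fun x => exists G, F G /\ G x)).

Definition is_quasi_proximity {X} (delta : set X -> set X -> Prop) : Prop :=
  (forall A B C, delta A (fun x => B x \/ C x) <-> (delta A B \/ delta A C)) /\
  (forall A B C, delta (fun x => A x \/ B x) C <-> (delta A C \/ delta B C)) /\
  (forall A B, delta A B -> (exists a, A a) /\ (exists b, B b)) /\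
  (forall A B, (exists x, A x /\ B x) -> delta A B) /\
  (forall A B, ~ delta A B ->
     exists C, ~ delta A C /\ ~ delta (fun x => ~ C x) B).

(** Topology induced by a quasi-proximity: cl A = {x | {x} delta A}. *)
Definition qp_topology {X} (delta : set X -> set X -> Prop) : set (set X) :=
  fun G => forall x, G x -> ~ delta (fun y => y = x) (fun y => ~ G y).

Definition qp_compatible {X} (delta : set X -> set X -> Prop) (tau : set (set X)) :=
  forall G, tau G <-> qp_topology delta G.

Definition is_rel_filter {X} (F : set (rel X)) : Prop :=
  F (fun _ _ => True) /\
  (forall U V, F U -> rsubset U V -> F V) /\
  (forall U V, F U -> F V -> F (fun x y => U x y /\ V x y)).

Definition rcomp {X} (V W : rel X) : rel X := fun x z => exists y, V x y /\ W y z.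

Definition is_quasi_uniformity {X} (QU : set (rel X)) : Prop :=
  is_rel_filter QU /\
  (forall U, QU U -> forall x, U x x) /\
  (forall U, QU U -> exists V, QU V /\ rsubset (rcomp V V) U).

Definition qu_topology {X} (QU : set (rel X)) : set (set X) :=
  fun G => forall x, G x -> exists U, QU U /\ forall y, U x y -> G y.

Definition qu_compatible {X} (QU : set (rel X)) (tau : set (set X)) :=
  is_quasi_uniformity QU /\ forall G, tau G <-> qu_topology QU G.

Definition qu_qprox {X} (QU : set (rel X)) : set X -> set X -> Prop :=
  fun A B => forall U, QU U -> exists a b, A a /\ B b /\ U a b.

Definition in_pi {X} (delta : set X -> set X -> Prop) (QU : set (rel X)) :=
  is_quasi_uniformity QU /\ forall A B, qu_qprox QU A B <-> delta A B.

Definition is_coarsest_in_pi {X} (delta : set X -> set X -> Prop) (V : set (rel X)) :=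
  in_pi delta V /\ forall W, in_pi delta W -> forall U, V U -> W U.

Definition transitive_rel {X} (U : rel X) := rsubset (rcomp U U) U.

Definition has_transitive_base {X} (QU : set (rel X)) :=
  forall U, QU U -> exists V, QU V /\ transitive_rel V /\ rsubset V U.

Definition in_T {X} (tau : set (set X)) (QU : set (rel X)) :=
  qu_compatible QU tau /\ has_transitive_base QU.

Definition U_of {X} (N : set X) : rel X := fun x y => (N x /\ N y) \/ ~ N x.

Definition in_B {X} (tau : set (set X)) (V : set (rel X)) (N : set X) :=
  tau N /\ V (U_of N).

Definition gen_filter {X} (S : set (rel X)) : set (rel X) :=
  fun W => exists l : list (rel X), (forall U, In U l -> S U) /\
     forall x y, (forall U, In U l -> U x y) -> W x y.

Definition is_nat_filter (sigma : set (set nat)) : Prop :=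
  sigma (fun _ => True) /\ ~ sigma (fun _ => False) /\
  (forall A B, sigma A -> subset A B -> sigma B) /\
  (forall A B, sigma A -> sigma B -> sigma (fun n => A n /\ B n)).

Definition convex_nat (H : set nat) :=
  forall i j k, H i -> H j -> i < k < j -> H k.

Definition is_pile (N H : set nat) :=
  subset H N /\ convex_nat H /\
  forall H', subset H H' -> subset H' N -> convex_nat H' -> subset H' H.

Definition card_le {T} (A : set T) (k : nat) :=
  forall l : list T, NoDup l -> (forall x, In x l -> A x) -> length l <= k.

Definition admissible (N Z : set nat) :=
  exists k, forall H, is_pile N H -> card_le (fun n => H n /\ Z n) k.

Definition is_p_filter (sigma : set (set nat)) :=
  is_nat_filter sigma /\
  forall N Z, sigma N -> admissible N Z -> sigma (fun n => N n /\ ~ Z n).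

Definition U_A {X} (Nseq : nat -> set X) (A : set nat) : rel X :=
  fun x y => forall i, ~ A i -> Nseq i x -> Nseq i y.

Definition V_sigma {X} (Vd : set (rel X)) (Nseq : nat -> set X) (sigma : set (set nat))
  : set (rel X) :=
  gen_filter (fun U => Vd U \/ exists A, sigma A /\ U = U_A Nseq A).

(* Main.v *)
Require Import Defs.
From Stdlib Require Import List Classical Lia FunctionalExtensionality PropExtensionality IndefiniteDescription.
Import ListNotations.
From Stdlib Require Import PeanoNat Arith.
Local Open Scope nat_scope.

Lemma set_ext {X} (A B : set X) : (forall x, A x <-> B x) -> A = B.
Proof. intros H; apply functional_extensionality; intro x; apply propositional_extensionality; auto. Qed.

Lemma qp_mono {X} (d : set X -> set X -> Prop) : is_quasi_proximity d ->
  forall A B A' B', d A B -> subset A A' -> subset B B' -> d A' B'.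
Proof.
  intros [H1 [H2 _]] A B A' B' HAB HA HB.
  assert (E1 : A' = (fun x => A x \/ A' x)) by (apply set_ext; firstorder).
  assert (E2 : B' = (fun x => B x \/ B' x)) by (apply set_ext; firstorder).
  assert (d A' B) by (rewrite E1; apply H2; auto).
  rewrite E2; apply H1; auto.
Qed.

Lemma qp_splitL {X} d : is_quasi_proximity d -> forall A B (C : set X), d A B ->
  d (fun x => A x /\ C x) B \/ d (fun x => A x /\ ~ C x) B.
Proof.
  intros Hq A B C H. pose proof Hq as (_&H2&_).
  apply H2. eapply qp_mono; eauto. intros x Hx; destruct (classic (C x)); auto.
  intros x Hx; exact Hx.
Qed.

Lemma qp_splitR {X} d : is_quasi_proximity d -> forall A B (C : set X), d A B ->
  d A (fun x => B x /\ C x) \/ d A (fun x => B x /\ ~ C x).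
Proof.
  intros Hq A B C H. pose proof Hq as (H1&_).
  apply H1. eapply qp_mono; eauto. intros x Hx; exact Hx.
  intros x Hx; destruct (classic (C x)); auto.
Qed.

Definition holds {X} (cs : list (set X * set X)) (x y : X) :=
  forall p, In p cs -> ~ (fst p x /\ snd p y).

Lemma GL {X} (d : set X -> set X -> Prop) (R : rel X) : is_quasi_proximity d ->
  (forall A B, d A B -> exists a b, A a /\ B b /\ R a b) ->
  forall cs, (forall p, In p cs -> ~ d (fst p) (snd p)) ->
  forall A B, d A B -> exists a b, A a /\ B b /\ holds cs a b /\ R a b.
Proof.
  intros Hq Hb cs. induction cs as [|[A0 B0] cs IH]; intros Hcs A B HAB.
  - destruct (Hb _ _ HAB) as (a&b&?&?&?). exists a, b; repeat split; auto. intros p [].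
  - assert (Hcs' : forall p, In p cs -> ~ d (fst p) (snd p)) by (intros; apply Hcs; simpl; auto).
    destruct (qp_splitL d Hq A B A0 HAB) as [H1|H1].
    + destruct (qp_splitR d Hq _ B B0 H1) as [H2|H2].
      * exfalso. apply (Hcs (A0,B0)); [simpl; auto|]. simpl.
        eapply qp_mono; eauto; intros x Hx; apply Hx.
      * destruct (IH Hcs' _ _ H2) as (a&b&[Ha1 Ha2]&[Hb1 Hb2]&Hh&HR).
        exists a, b; repeat split; auto. intros p [<-|Hp]; simpl. tauto. apply Hh; auto.
    + destruct (IH Hcs' _ _ H1) as (a&b&[Ha1 Ha2]&Hb1&Hh&HR).
      exists a,b; repeat split; auto. intros p [<-|Hp]; simpl. tauto. apply Hh; auto.
Qed.

Lemma gf_true {X} (S : set (rel X)) : gen_filter S (fun _ _ => True).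
Proof. exists []; split; [intros _ []|auto]. Qed.

Lemma gf_gen {X} (S : set (rel X)) U : S U -> gen_filter S U.
Proof. intros H; exists [U]; split. intros V [<-|[]]; auto. intros x y Hl; apply Hl; simpl; auto. Qed.

Lemma gf_cap {X} S (U V : rel X) : gen_filter S U -> gen_filter S V ->
  gen_filter S (fun x y => U x y /\ V x y).
Proof.
  intros [l1 [H1 H1']] [l2 [H2 H2']]. exists (l1 ++ l2); split.
  - intros W HW; apply in_app_or in HW; destruct HW; auto.
  - intros x y Hl; split; [apply H1'|apply H2']; intros W HW; apply Hl; apply in_or_app; auto.
Qed.

Lemma gf_filter {X} (S : set (rel X)) : is_rel_filter (gen_filter S).
Proof.
  split; [apply gf_true|split; [|apply gf_cap]].
  intros U V [l [H1 H2]] HUV. exists l; split; auto.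
Qed.

Lemma gf_refl {X} (S : set (rel X)) : (forall U, S U -> forall x, U x x) ->
  forall U, gen_filter S U -> forall x, U x x.
Proof. intros H U [l [Hl HU]] x. apply HU; intros V HV; apply H, Hl; auto. Qed.

Lemma gf_root {X} (S : set (rel X)) :
  (forall U, S U -> exists V, gen_filter S V /\ rsubset (rcomp V V) U) ->
  forall U, gen_filter S U -> exists V, gen_filter S V /\ rsubset (rcomp V V) U.
Proof.
  intros H U [l [Hl HU]].
  assert (H0 : exists V, gen_filter S V /\ forall x z, rcomp V V x z -> forall W, In W l -> W x z).
  { clear HU. induction l as [|W l IH].
    - exists (fun _ _ => True); split. apply gf_true. intros _ _ _ _ [].
    - destruct (H W (Hl W (or_introl eq_refl))) as [V1 [HV1 HV1']].
      destruct IH as [V2 [HV2 HV2']]. intros; apply Hl; simpl; auto.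
      exists (fun x y => V1 x y /\ V2 x y); split. apply gf_cap; auto.
      intros x z [y [[? ?] [? ?]]] W' [<-|HW'].
      + apply HV1'; exists y; auto.
      + apply HV2'; [exists y; auto| auto]. }
  destruct H0 as [V [HV HV']]. exists V; split; auto.
  intros x z Hc; apply HU; intros W HW; apply HV'; auto.
Qed.

Definition UAB {X} (A B : set X) : rel X := fun x y => ~ (A x /\ B y).
Definition Tgen {X} (d : set X -> set X -> Prop) : set (rel X) :=
  fun U => exists A B, ~ d A B /\ U = UAB A B.
Definition Td {X} (d : set X -> set X -> Prop) : set (rel X) := gen_filter (Tgen d).

Lemma T_to_cs {X} d (W : rel X) : Td d W -> exists cs,
  (forall p, In p cs -> ~ d (fst p) (snd p)) /\ forall x y, holds cs x y -> W x y.
Proof.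
  intros [l [Hl HW]].
  assert (H : exists cs, (forall p, In p cs -> ~ d (fst p) (snd p)) /\
     forall x y, holds cs x y -> forall U, In U l -> U x y).
  { clear HW. induction l as [|U l IH].
    - exists []; split; [intros _ []|intros _ _ _ _ []].
    - destruct (Hl U (or_introl eq_refl)) as (A&B&HAB&->).
      destruct IH as [cs [H1 H2]]. intros; apply Hl; simpl; auto.
      exists ((A,B)::cs); split.
      + intros p [<-|Hp]; auto.
      + intros x y Hh V [<-|HV].
        * intro Hc; apply (Hh (A,B)); simpl; auto.
        * apply H2; auto. intros p Hp; apply Hh; simpl; auto. }
  destruct H as [cs [H1 H2]]; exists cs; split; auto.
  intros x y Hh; apply HW; apply H2; auto.
Qed.

Lemma Td_pi {X} (d : set X -> set X -> Prop) : is_quasi_proximity d -> in_pi d (Td d).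
Proof.
  intros Hq. pose proof Hq as (Q1&Q2&Q3&Q4&Q5).
  split; [split; [|split]|].
  - apply gf_filter.
  - apply gf_refl. intros U (A&B&HAB&->) x [Ha Hb]. apply HAB, Q4; exists x; auto.
  - apply gf_root. intros U (A&B&HAB&->). destruct (Q5 _ _ HAB) as [C [HAC HCB]].
    exists (fun x y => UAB A C x y /\ UAB (fun x => ~ C x) B x y). split.
    + apply gf_cap; apply gf_gen.
      * exists A, C; auto.
      * exists (fun x => ~ C x), B; auto.
    + intros x z [y [[H1 _] [_ H2]]] [Hx Hz]. apply H2; split; auto.
  - intros A B; split.
    + intros H. apply NNPP; intro HAB. destruct (H (UAB A B)) as (a&b&Ha&Hb&Hu).
      * apply gf_gen; eexists; eexists; eauto.
      * apply Hu; auto.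
    + intros HAB U HU. destruct (T_to_cs d U HU) as [cs [H1 H2]].
      destruct (GL d (fun _ _ => True) Hq) with (cs := cs) (A := A) (B := B) as (a&b&Ha&Hb&Hh&_); auto.
      * intros A' B' H; destruct (Q3 _ _ H) as [[a ?] [b ?]]; exists a, b; auto.
      * exists a, b; auto.
Qed.

Lemma split_list (Q : nat -> Prop) (l : list nat) : exists l1 l2,
  (forall x, In x l1 -> In x l /\ Q x) /\ (forall x, In x l2 -> In x l /\ ~ Q x) /\
  length l1 + length l2 = length l /\ (NoDup l -> NoDup l1 /\ NoDup l2).
Proof.
  induction l as [|a l IH].
  - exists [], []; simpl; repeat split; try contradiction; constructor.
  - destruct IH as (l1&l2&H1&H2&H3&H4). destruct (classic (Q a)) as [Ha|Ha].
    + exists (a::l1), l2. split; [|split; [|split]].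
      * intros x [<-|Hx]; simpl; auto. destruct (H1 x Hx); auto.
      * intros x Hx. destruct (H2 x Hx); simpl; auto.
      * simpl; lia.
      * intros Hn. inversion Hn as [|? ? Hna Hnl]; subst. destruct (H4 Hnl). split; auto. constructor; auto.
        intro Hin; apply Hna; apply H1; auto.
    + exists l1, (a::l2). split; [|split; [|split]].
      * intros x Hx. destruct (H1 x Hx); simpl; auto.
      * intros x [<-|Hx]; simpl; auto. destruct (H2 x Hx); auto.
      * simpl; lia.
      * intros Hn. inversion Hn as [|? ? Hna Hnl]; subst. destruct (H4 Hnl). split; auto. constructor; auto.
        intro Hin; apply Hna; apply H2; auto.
Qed.

Lemma PH {X} (f : nat -> X) (Ps : list (set X)) : forall (l : list nat), NoDup l ->
  Nat.pow 2 (length Ps) < length l ->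
  exists i j, In i l /\ In j l /\ i <> j /\ forall P, In P Ps -> (P (f i) <-> P (f j)).
Proof.
  induction Ps as [|P Ps IH]; intros l Hn Hlen.
  - simpl in Hlen. destruct l as [|i [|j l]]; simpl in Hlen; try lia.
    exists i, j. split; [simpl; auto|split; [simpl; auto|split]].
    + intro E; subst. inversion Hn; subst. apply H1; simpl; auto.
    + intros _ [].
  - destruct (split_list (fun i => P (f i)) l) as (l1&l2&H1&H2&H3&H4).
    destruct (H4 Hn) as [Hn1 Hn2]. simpl in Hlen.
    destruct (Nat.lt_ge_cases (Nat.pow 2 (length Ps)) (length l1)) as [Hl1|Hl1].
    + destruct (IH l1 Hn1 Hl1) as (i&j&Hi&Hj&Hij&Hag).
      destruct (H1 i Hi), (H1 j Hj).
      exists i, j; split; [auto|split; [auto|split; [auto|]]]. intros P' [<-|HP']; [tauto|auto].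
    + assert (Hl2 : Nat.pow 2 (length Ps) < length l2) by lia.
      destruct (IH l2 Hn2 Hl2) as (i&j&Hi&Hj&Hij&Hag).
      destruct (H2 i Hi), (H2 j Hj).
      exists i, j; split; [auto|split; [auto|split; [auto|]]]. intros P' [<-|HP']; [tauto|auto].
Qed.

Theorem mainTheorem9 (X : Type) (tau : set (set X))
  (delta : set X -> set X -> Prop) (Vd : set (rel X)) (Nseq : nat -> set X) :
  is_topology tau ->
  is_quasi_proximity delta ->
  qp_compatible delta tau ->
  is_coarsest_in_pi delta Vd ->
  has_transitive_base Vd ->
  (forall i, in_B tau Vd (Nseq i)) ->
  (forall i, subset (Nseq i) (Nseq (S i)) /\
             exists x, Nseq (S i) x /\ ~ Nseq i x) ->
  in_B tau Vd (fun x => exists i, Nseq i x) ->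
  (forall sigma, is_p_filter sigma ->
      in_pi delta (V_sigma Vd Nseq sigma) /\ in_T tau (V_sigma Vd Nseq sigma)) /\
  (forall sigma1 sigma2, is_p_filter sigma1 -> is_p_filter sigma2 ->
      (forall U, V_sigma Vd Nseq sigma1 U -> V_sigma Vd Nseq sigma2 U) ->
      forall A, sigma1 A -> sigma2 A) /\
  (forall sigma1 sigma2, is_p_filter sigma1 -> is_p_filter sigma2 ->
      (forall U, V_sigma Vd Nseq sigma1 U <-> V_sigma Vd Nseq sigma2 U) ->
      forall A, sigma1 A <-> sigma2 A).
Proof.
  intros Htop Hq Hcomp [HVpi HVco] Htb HB Hinc HBN.
  pose proof Hq as (Q1&Q2&Q3&Q4&Q5).
  pose proof HVpi as [[[VT [Vup Vcap]] [Vrefl Vroot]] HVd].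
  assert (Nmono : forall i j, i <= j -> subset (Nseq i) (Nseq j)).
  { intros i j Hij; induction Hij; intros x Hx; auto. apply (proj1 (Hinc m)); auto. }
  assert (VTd : forall U, Vd U -> Td delta U) by (intros U HU; exact (HVco _ (Td_pi _ Hq) U HU)).
  set (D := fun x y => forall i, Nseq i x -> Nseq i y).
  assert (Hbase : forall A B, delta A B -> exists a b, A a /\ B b /\ D a b).
  { intros A B HAB. apply HVd in HAB.
    destruct (classic (exists L, forall a, A a -> Nseq L a)) as [[L HL]|HnL].
    - assert (Vfin : forall L, Vd (fun x y => forall i, i <= L -> U_of (Nseq i) x y)).
      { induction L0 as [|L0 IH].
        - apply Vup with (U_of (Nseq 0)). apply (proj2 (HB 0)).
          intros x y H i Hi. replace i with 0 by lia. auto.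
        - apply Vup with (fun x y => (forall i, i <= L0 -> U_of (Nseq i) x y) /\ U_of (Nseq (S L0)) x y).
          + apply Vcap; auto. apply (proj2 (HB (S L0))).
          + intros x y [H1 H2] i Hi. destruct (Nat.eq_dec i (S L0)). subst; auto. apply H1; lia. }
      destruct (HAB _ (Vfin L)) as (a&b&Ha&Hb&Hab). exists a, b; split; [auto|split; [auto|]].
      intros i Hi. destruct (le_lt_dec i L).
      + destruct (Hab i l) as [[_ ?]|?]; tauto.
      + apply (Nmono L i); [lia|]. destruct (Hab L (le_n L)) as [[_ ?]|Hn]; auto. exfalso; auto.
    - destruct (HAB _ (proj2 HBN)) as (a&b&Ha&Hb&Hab). destruct Hab as [[Na [L HbL]]|nNa].
      + assert (Hex : exists a', A a' /\ ~ Nseq L a').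
        { apply NNPP; intro Hc; apply HnL; exists L; intros a' Ha'. apply NNPP; intro Hn; apply Hc; eauto. }
        destruct Hex as [a' [Ha' Hna']].
        exists a', b. split; [auto|split; [auto|]]. intros i Hi. destruct (le_lt_dec i L).
        * exfalso; apply Hna', (Nmono i L); auto.
        * apply (Nmono L i); [lia|auto].
      + exists a, b. split; [auto|split; [auto|]]. intros i Hi; exfalso; apply nNa; exists i; auto. }
  assert (Dec : forall sigma, is_nat_filter sigma -> forall W, V_sigma Vd Nseq sigma W ->
     exists V Sg, Vd V /\ sigma Sg /\ forall x y, V x y -> U_A Nseq Sg x y -> W x y).
  { intros sigma [sT [s0 [sup scap]]] W [l [Hl HW]].
    assert (H : exists V Sg, Vd V /\ sigma Sg /\ forall x y, V x y -> U_A Nseq Sg x y ->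
                  forall U, In U l -> U x y).
    { clear HW. induction l as [|U l IH].
      - exists (fun _ _ => True), (fun _ => True). split; [auto|split; [auto|]]. intros _ _ _ _ _ [].
      - destruct IH as (V&Sg&HV&HSg&HVS). intros; apply Hl; simpl; auto.
        destruct (Hl U (or_introl eq_refl)) as [HU|[S' [HS' ->]]].
        + exists (fun x y => V x y /\ U x y), Sg. split; [apply Vcap; auto|split; [auto|]].
          intros x y [H1 H2] H3 U' [<-|HU']; auto. apply HVS; auto.
        + exists V, (fun n => Sg n /\ S' n). split; [auto|split; [auto|]].
          intros x y H1 H3 U' [<-|HU'].
          * intros i Hi; apply H3; intros [_ ?]; auto.
          * apply HVS; auto. intros i Hi; apply H3; intros [? _]; auto. }
    destruct H as (V&Sg&HV&HSg&HVS). exists V, Sg. split; [auto|split; [auto|]].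
    intros x y H1 H2; apply HW; apply HVS; auto. }
  assert (Ppi : forall sigma, is_p_filter sigma -> in_pi delta (V_sigma Vd Nseq sigma)).
  { intros sigma [Hsf _].
    assert (Vin : forall U, Vd U -> V_sigma Vd Nseq sigma U) by (intros U HU; apply gf_gen; left; auto).
    split; [split; [|split]|].
    - apply gf_filter.
    - apply gf_refl. intros U [HU|[Sg [_ ->]]] x. apply Vrefl; auto. intros i _ H; auto.
    - apply gf_root. intros U [HU|[Sg [HS ->]]].
      + destruct (Vroot U HU) as [V [HV HVV]]. exists V; split; auto. apply Vin; auto.
      + exists (U_A Nseq Sg). split. apply gf_gen; right; eauto.
        intros x z [y [H1 H2]] i Hi Hx. apply H2, H1; auto.
    - intros A B; split.
      + intros H. apply HVd. intros U HU. apply H. apply Vin; auto.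
      + intros HAB W HW. destruct (Dec sigma Hsf W HW) as (V&Sg&HV&HS&HVW).
        destruct (T_to_cs delta V (VTd V HV)) as [cs [Hcs HcsV]].
        destruct (GL delta D Hq Hbase cs Hcs A B HAB) as (a&b&Ha&Hb&Hh&HD).
        exists a, b. split; [auto|split; [auto|]]. apply HVW; auto. intros i _ Hi; apply HD; auto. }
  assert (PT : forall sigma, is_p_filter sigma -> in_T tau (V_sigma Vd Nseq sigma)).
  { intros sigma Hs. pose proof (Ppi sigma Hs) as [Hqu Hpr]. split. split; auto.
    - intros G. rewrite (Hcomp G). unfold qp_topology, qu_topology. split.
      + intros H x Hx. specialize (H x Hx). rewrite <- Hpr in H. apply not_all_ex_not in H.
        destruct H as [U HU]. apply imply_to_and in HU. destruct HU as [HU HnU].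
        exists U; split; auto. intros y Hy. apply NNPP; intro Hg; apply HnU; exists x, y; auto.
      + intros H x Hx Hd. rewrite <- Hpr in Hd. destruct (H x Hx) as [U [HU HUG]].
        destruct (Hd U HU) as (a&b&Ha&Hb&Hab). subst a. apply Hb, HUG; auto.
    - intros W HW. destruct Hs as [Hsf _]. destruct (Dec sigma Hsf W HW) as (V&Sg&HV&HS&HVW).
      destruct (Htb V HV) as [V' [HV' [HtV' HV'V]]].
      exists (fun x y => V' x y /\ U_A Nseq Sg x y). split; [|split].
      + apply gf_cap; apply gf_gen; [left|right; eauto]; auto.
      + intros x z [y [[H1 H2] [H3 H4]]]. split. apply HtV'; exists y; auto.
        intros i Hi Hx; apply H4, H2; auto.
      + intros x y [H1 H2]; apply HVW; auto. }
  assert (pf : exists p : nat -> X, forall i, Nseq (S i) (p i) /\ ~ Nseq i (p i)).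
  { exists (fun i => proj1_sig (constructive_indefinite_description _ (proj2 (Hinc i)))).
    intro i; exact (proj2_sig (constructive_indefinite_description _ (proj2 (Hinc i)))). }
  destruct pf as [p Hp].
  assert (P2 : forall s1 s2, is_p_filter s1 -> is_p_filter s2 ->
      (forall U, V_sigma Vd Nseq s1 U -> V_sigma Vd Nseq s2 U) -> forall A, s1 A -> s2 A).
  { intros s1 s2 Hs1 [Hs2f Hs2p] Hsub A HA.
    assert (HUA : V_sigma Vd Nseq s2 (U_A Nseq A)) by (apply Hsub, gf_gen; right; eauto).
    destruct (Dec s2 Hs2f _ HUA) as (V&Sg&HV&HSg&HVW).
    destruct (T_to_cs delta V (VTd V HV)) as [cs [Hcs HcsV]].
    pose proof Hs2f as [_ [_ [s2up _]]].
    apply s2up with (fun n => Sg n /\ ~ (fun n => ~ A n) n).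
    2: { intros n [_ Hn]; apply NNPP; auto. }
    apply Hs2p; auto.
    exists (Nat.pow 2 (length (map snd cs))). intros H [HHS [Hconv _]] l Hnd Hl.
    destruct (le_lt_dec (length l) (Nat.pow 2 (length (map snd cs)))) as [|Hlt]; auto. exfalso.
    destruct (PH p (map snd cs) l Hnd Hlt) as (i&j&Hi&Hj&Hij&Hag).
    assert (key : forall i j, i < j -> In i l -> In j l ->
       (forall P, In P (map snd cs) -> (P (p i) <-> P (p j))) -> False).
    { clear i j Hi Hj Hij Hag. intros i j Hij Hi Hj Hag.
      destruct (Hl i Hi) as [HHi HAi]. destruct (Hl j Hj) as [HHj HAj].
      destruct (Hp i) as [Hpi1 Hpi2]. destruct (Hp j) as [Hpj1 Hpj2].
      assert (Hxy : U_A Nseq A (p i) (p j)).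
      { apply HVW.
        - apply HcsV. intros [A' B'] Hin [HA' HB']. simpl in *.
          assert (HB'x : B' (p i)).
          { apply (Hag B'); auto. apply in_map_iff. exists (A',B'); auto. }
          apply (Hcs (A',B') Hin). simpl. apply Q4; exists (p i); auto.
        - intros m Hm Hmx.
          destruct (le_lt_dec m i).
          + exfalso; apply Hpi2, (Nmono m i); auto.
          + destruct (le_lt_dec m j).
            * exfalso; apply Hm. apply HHS. destruct (Nat.eq_dec m j).
              -- subst; auto.
              -- apply (Hconv i j m); auto. lia.
            * apply (Nmono (S j) m); [lia|auto]. }
      apply Hpj2. apply (Hxy j HAj). apply (Nmono (S i) j); [lia|auto]. }
    destruct (Nat.lt_total i j) as [H1|[H1|H1]].
    - apply (key i j); auto.
    - contradiction.
    - apply (key j i); auto. intros P HP; symmetry; auto. }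
  split; [|split].
  - intros sigma Hs; split; auto.
  - exact P2.
  - intros s1 s2 H1 H2 Heq A; split; apply P2; auto; intros U; apply Heq.
Qed.
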